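(* For $n\ge1$, $\operatorname{zir}(P_n)=\operatorname{Z}(P_n)=1$. For $n\ge4$, $\overline{\operatorname{Z}}(P_n)=2$. For $n\ge5$, $\operatorname{ZIR}(P_n)=\lfloor (n-1)/2\rfloor$.
   Context: $P_n$ is the path on $n$ vertices. Zero forcing: a blue vertex $u$ changes a white vertex $w$ to blue if $w$ is the only white neighbor of $u$; $B$ is a zero forcing set if from blue set $B$ eventually all vertices are blue; $\operatorname{Z}(G)$ is the minimum size of a zero forcing set and $\overline{\operatorname{Z}}(G)$ the maximum size of an inclusion-minimal zero forcing set. A nonempty $F\subseteq V(G)$ is a fort if every $v\notin F$ has $|N(v)\cap F|\ne1$. A private fort of $x\in S$ relative to $S$ is a fort $F$ with $S\cap F=\{x\}$; $S$ is a ZIr-set if every element of $S$ has a private fort. $\operatorname{zir}(G)$ / $\operatorname{ZIR}(G)$ are the minimum / maximum cardinality of an inclusion-maximal ZIr-set. *)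

(* Defs.v *)
From mathcomp Require Import all_boot.
From mathcomp Require Import boolp.

Set Implicit Arguments.
Unset Strict Implicit.
Unset Printing Implicit Defensive.

Section Graphs.
Variables (T : finType) (adj : rel T).

Definition nbhd (v : T) : {set T} := [set w | adj v w].

(* Sequential zero forcing: from blue set B, C is reachable by a chronological
   list of forces; a force u -> w requires u blue, w white and w the only white
   neighbour of u. *)
Inductive zf_reach (B : {set T}) : {set T} -> Prop :=
| zf_refl : zf_reach B B
| zf_force (C : {set T}) (u w : T) :
    zf_reach B C -> u \in C -> w \notin C ->
    nbhd u :\: C = [set w] -> zf_reach B (w |: C).

Definition zero_forcing (B : {set T}) : Prop := zf_reach B [set: T].

Definition minimal_zero_forcing (B : {set T}) : Prop :=
  zero_forcing B /\ (forall B' : {set T}, B' \proper B -> ~ zero_forcing B').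

Definition Z : nat :=
  \big[minn/#|T|]_(S : {set T} | `[< zero_forcing S >]) #|S|.

Definition Zbar : nat :=
  \max_(S : {set T} | `[< minimal_zero_forcing S >]) #|S|.

Definition fort (F : {set T}) : bool :=
  (F != set0) && [forall v in ~: F, #|nbhd v :&: F| != 1].

Definition private_fort (S : {set T}) (x : T) (F : {set T}) : bool :=
  fort F && (S :&: F == [set x]).

Definition ZIr_set (S : {set T}) : bool :=
  [forall x in S, exists F : {set T}, private_fort S x F].

Definition maximal_ZIr_set (S : {set T}) : bool :=
  ZIr_set S && [forall S' : {set T}, (S \proper S') ==> ~~ ZIr_set S'].

Definition zir : nat :=
  \big[minn/#|T|]_(S : {set T} | maximal_ZIr_set S) #|S|.

Definition ZIR : nat :=
  \max_(S : {set T} | maximal_ZIr_set S) #|S|.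

End Graphs.

Definition path_adj (n : nat) : rel 'I_n :=
  fun i j => (i.+1 == j :> nat) || (j.+1 == i :> nat).

(* Main.v *)
Require Import Defs.
From mathcomp Require Import all_boot.
From mathcomp Require Import boolp.
From mathcomp Require Import zify.
Set Implicit Arguments. Unset Strict Implicit.

Section P.
Variable m : nat.
Local Notation V := ('I_m.+1).
Local Notation adj := (@path_adj m.+1).

Lemma inK k : k <= m -> (inord k : V) = k :> nat.
Proof. by move=> h; rewrite inordK. Qed.

Lemma adjE (x y : V) : adj x y = (x.+1 == y :> nat) || (y.+1 == x :> nat).
Proof. by []. Qed.

Lemma nbhdE (x y : V) : (y \in nbhd adj x) = (x.+1 == y :> nat) || (y.+1 == x :> nat).
Proof. by rewrite inE. Qed.

Lemma nbhd_int v : 0 < v < m ->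
  nbhd adj (inord v) = [set inord v.-1; inord v.+1].
Proof.
move=> hv; apply/setP=> y; rewrite nbhdE !inE inK; last lia.
apply/idP/idP.
- case/orP=> /eqP h; apply/orP; [right|left]; apply/eqP/val_inj; rewrite /= inK; lia.
- by case/orP=> /eqP -> ; rewrite inK; lia.
Qed.

Lemma card_nbhd_int v : 0 < v < m -> #|nbhd adj (inord v)| = 2.
Proof.
move=> hv; rewrite nbhd_int // cards2; case: eqP => // /(congr1 val).
rewrite /= !inK; lia.
Qed.
Definition B (F : {set V}) k := (k <= m) && ((inord k : V) \in F).

Lemma BE F (x : V) : B F x = (x \in F).
Proof. by rewrite /B inord_val -ltnS ltn_ord. Qed.

Lemma fortP F : fort adj F -> forall v : V, v \notin F -> #|nbhd adj v :&: F| != 1.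
Proof. by case/andP=> _ /forallP h v hv; have := h v; rewrite inE hv. Qed.

Lemma fort_n0 F : fort adj F -> exists x, x \in F.
Proof. by case/andP=> /set0Pn. Qed.

Lemma fort_step F v : fort adj F -> v <= m -> ~~ B F v ->
  ((0 < v) && B F v.-1) = B F v.+1.
Proof.
move=> hF hv hB; have hn : (inord v : V) \notin F by move: hB; rewrite /B hv.
have := fortP hF hn.
case e1: (_ && _); case e2: (B F v.+1) => //.
- move/andP: e1 => [v0 /andP [h1 h2]].
  suff -> : nbhd adj (inord v) :&: F = [set inord v.-1] by rewrite cards1.
  apply/setP=> y; rewrite in_setI nbhdE in_set1 inK //; apply/idP/idP.
  + case/andP=> /orP [] /eqP e yF.
    * by move: e2; rewrite /B e inord_val yF (_ : y <= m) // -ltnS ltn_ord.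
    * by apply/eqP/val_inj; rewrite /= inK; lia.
  + move/eqP->; rewrite h2 inK //; lia.
- move/andP: e2 => [h1 h2].
  suff -> : nbhd adj (inord v) :&: F = [set inord v.+1] by rewrite cards1.
  apply/setP=> y; rewrite in_setI nbhdE in_set1 inK //; apply/idP/idP.
  + case/andP=> /orP [] /eqP e yF.
    * by apply/eqP/val_inj; rewrite /= inK; lia.
    * move: e1; rewrite /B.
      have -> : v.-1 = y by lia.
      by rewrite inord_val yF (_ : y <= m) ?andbT; [lia | rewrite -ltnS ltn_ord].
  + move/eqP->; rewrite h2 inK //; lia.
Qed.

Definition Pp F j := ~~ B F j && ~~ B F j.+1.

Lemma Pp_fwd F j : fort adj F -> Pp F j -> Pp F j.+1.
Proof.
move=> hF /andP [h1 h2]; rewrite /Pp h2 /=.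
case: (leqP j.+1 m) => hj.
- by rewrite -(fort_step hF hj h2) /= (negbTE h1).
- by rewrite /B; apply/negP=> /andP [h _]; lia.
Qed.

Lemma Pp_bwd F j : fort adj F -> j < m -> Pp F j.+1 -> Pp F j.
Proof.
move=> hF hj /andP [h1 h2]; rewrite /Pp h1 andbT.
by have := fort_step hF hj h1; rewrite (negbTE h2) /= => ->.
Qed.

Lemma Pp_false F v : fort adj F -> v <= m -> Pp F v -> False.
Proof.
move=> hF hv hP.
have all : forall j, Pp F j.
  move=> j; case: (leqP v j) => hj.
  - rewrite -(subnK hj); elim: (j - v) => [|k IH] //=; by apply: Pp_fwd.
  - have : forall k, k <= v -> Pp F (v - k).
      elim=> [|k IH] hk; first by rewrite subn0.
      have e : v - k = (v - k.+1).+1 by lia.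
      by apply: Pp_bwd; [| lia | rewrite -e; apply: IH; lia].
    by move/(_ (v - j)); rewrite subKn; [apply; lia | lia].
have [x hx] := fort_n0 hF.
by have := all x; rewrite /Pp BE hx.
Qed.

Lemma fort0 F : fort adj F -> (ord0 : V) \in F.
Proof.
move=> hF; apply/negPn/negP=> h.
have hB : ~~ B F 0 by rewrite /B /= (_ : inord 0 = ord0) //; apply/val_inj; rewrite /= inK.
have := fort_step hF (leq0n _) hB; rewrite /= => e.
by apply: (Pp_false hF (leq0n m)); rewrite /Pp hB -e.
Qed.

Lemma fortm F : fort adj F -> (ord_max : V) \in F.
Proof.
move=> hF; apply/negPn/negP=> h.
case: (posnP m) => hm.
  have e0 : (ord0 : V) = ord_max by apply: val_inj; rewrite /= hm.
  by have := fort0 hF; rewrite e0 (negbTE h).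
have hB : ~~ B F m by rewrite /B leqnn (_ : inord _ = ord_max) //; apply/val_inj; rewrite /= inK.
have := fort_step hF (leqnn _) hB => /=.
rewrite {2}/B ltnn hm /= => e.
apply: (Pp_false (v := m.-1) hF); first lia.
by rewrite /Pp prednK // hB e.
Qed.

Lemma fort_adj F (x y : V) : fort adj F -> x \notin F -> y \notin F -> adj x y -> False.
Proof.
move=> hF hx hy; rewrite adjE => /orP [] /eqP e.
- apply: (Pp_false (v := x) hF); first by rewrite -ltnS.
  by rewrite /Pp e !BE hx hy.
- apply: (Pp_false (v := y) hF); first by rewrite -ltnS.
  by rewrite /Pp e !BE hx hy.
Qed.
Definition Iv lo hi := [set i : V | lo <= i <= hi].

Lemma Iv_full : Iv 0 m = [set: V].
Proof. by apply/setP=> i; rewrite !inE /= -ltnS ltn_ord. Qed.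

Lemma zf_step_r Bs lo hi : zf_reach adj Bs (Iv lo hi) -> (lo < hi) || (lo == 0) -> hi < m ->
  lo <= hi -> zf_reach adj Bs (Iv lo hi.+1).
Proof.
move=> hR hc hm hl.
have -> : Iv lo hi.+1 = (inord hi.+1 : V) |: Iv lo hi.
  apply/setP=> i; rewrite !inE; apply/idP/idP.
  - move=> h; case: (i =P hi.+1 :> nat) => e.
      by apply/orP; left; apply/eqP/val_inj; rewrite /= inK.
    by apply/orP; right; lia.
  - case/orP; last lia.
    by move/eqP->; rewrite inK //; lia.
apply: (zf_force (u := inord hi)) => //.
- by rewrite !inE inK; lia.
- by rewrite !inE inK; lia.
- apply/setP=> i; rewrite in_setD nbhdE !inE !inK; try lia.
  apply/idP/idP.
  + case/andP=> h1 /orP [] /eqP e; first by apply/eqP/val_inj; rewrite /= inK.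
    move: h1; lia.
  + move/eqP->; rewrite inK; lia.
Qed.

Lemma zf_right Bs lo hi : zf_reach adj Bs (Iv lo hi) -> (lo < hi) || (lo == 0) -> hi <= m ->
  lo <= hi -> zf_reach adj Bs (Iv lo m).
Proof.
move=> hR hc hm hl.
have : forall k, k <= m - hi -> zf_reach adj Bs (Iv lo (k + hi)).
  elim=> [|k IH] hk //=.
  rewrite addSn; apply: zf_step_r; [apply: IH| | |]; lia.
by move/(_ (m - hi) (leqnn _)); rewrite subnK.
Qed.

Lemma zf_step_l Bs lo hi : zf_reach adj Bs (Iv lo.+1 hi) -> (lo.+1 < hi) || (hi == m) -> hi <= m ->
  lo.+1 <= hi -> zf_reach adj Bs (Iv lo hi).
Proof.
move=> hR hc hm hl.
have -> : Iv lo hi = (inord lo : V) |: Iv lo.+1 hi.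
  apply/setP=> i; rewrite !inE; apply/idP/idP.
  - move=> h; case: (i =P lo :> nat) => e.
      by apply/orP; left; apply/eqP/val_inj; rewrite /= inK //; lia.
    by apply/orP; right; lia.
  - case/orP; last lia.
    by move/eqP->; rewrite inK //; lia.
apply: (zf_force (u := inord lo.+1)) => //.
- by rewrite !inE inK; lia.
- by rewrite !inE inK; lia.
- apply/setP=> i; rewrite in_setD nbhdE !inE !inK; try lia.
  have := ltn_ord i; rewrite ltnS => him.
  apply/idP/idP.
  + case/andP=> h1 /orP [] /eqP e; last by apply/eqP/val_inj; rewrite /= inK; lia.
    move: h1; lia.
  + move/eqP->; rewrite inK; lia.
Qed.

Lemma zf_left Bs lo hi : zf_reach adj Bs (Iv lo hi) -> (lo < hi) || (hi == m) -> hi <= m ->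
  lo <= hi -> zf_reach adj Bs (Iv 0 hi).
Proof.
move=> hR hc hm hl.
have : forall k, k <= lo -> zf_reach adj Bs (Iv (lo - k) hi).
  elim=> [|k IH] hk; first by rewrite subn0.
  have e : lo - k = (lo - k.+1).+1 by lia.
  apply: zf_step_l => //; first by rewrite -e; apply: IH; lia.
  - lia.
  - lia.
by move/(_ lo (leqnn _)); rewrite subnn.
Qed.
Definition good (Bs : {set V}) :=
  exists2 x, x \in Bs & (nat_of_ord x = 0 \/ nat_of_ord x = m \/ exists2 y, y \in Bs & nat_of_ord y = (nat_of_ord x).+1).

Lemma zf_struct Bs C : zf_reach adj Bs C -> C = Bs \/ good Bs.
Proof.
elim=> [|C' u w _ [->|] hu hw hN]; [by left | | by right].
right.
case: (posnP u) => [|u0]; first by exists u => //; left.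
case: (ltngtP u m) => [um|mu|um]; last 2 first.
- by have := ltn_ord u; rewrite ltnS; lia.
- by exists u => //; right; left.
have hu' : u = inord u by rewrite inord_val.
have hN2 := hN; rewrite hu' nbhd_int ?u0 // in hN2.
case: (boolP ((inord u.-1 : V) \in Bs)) => h1.
- exists (inord u.-1) => //; right; right; exists u => //; rewrite /= inK; lia.
- case: (boolP ((inord u.+1 : V) \in Bs)) => h2.
  + by exists u => //; right; right; exists (inord u.+1); rewrite // /= inK.
  + have i1 : (inord u.-1 : V) \in [set w] by rewrite -hN2 !inE eqxx h1.
    have i2 : (inord u.+1 : V) \in [set w] by rewrite -hN2 !inE eqxx orbT h2.
    rewrite !inE in i1 i2; exfalso; move: i1 i2 => /eqP e1 /eqP e2.
    by move: (congr1 val (etrans e1 (esym e2))); rewrite /= !inK; lia.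
Qed.

Lemma zf_good Bs : zero_forcing adj Bs -> good Bs.
Proof.
move/zf_struct => [e|//]; exists ord0; first by rewrite -e inE.
by left.
Qed.

Lemma zf0 : zero_forcing adj [set ord0 : V].
Proof.
rewrite /zero_forcing -Iv_full.
have -> : [set ord0 : V] = Iv 0 0.
  by apply/setP=> i; rewrite !inE leqn0; apply/eqP/eqP => [->|h] //; apply/val_inj.
by apply: (zf_right (hi := 0)) => //; exact: zf_refl.
Qed.

Lemma zfm : zero_forcing adj [set ord_max : V].
Proof.
rewrite /zero_forcing -Iv_full.
have -> : [set ord_max : V] = Iv m m.
  apply/setP=> i; rewrite !inE; have := ltn_ord i => hi.
  apply/eqP/idP => [->/=|h]; first lia.
  by apply/val_inj; rewrite /=; lia.
by apply: (zf_left (lo := m)) => //; [exact: zf_refl | rewrite eqxx orbT].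
Qed.

Lemma zfpair a : a < m -> zero_forcing adj [set (inord a : V); inord a.+1].
Proof.
move=> am; rewrite /zero_forcing -Iv_full.
have -> : [set (inord a : V); inord a.+1] = Iv a a.+1.
  apply/setP=> i; rewrite !inE; apply/idP/idP.
  - by case/orP=> /eqP ->; rewrite inK; lia.
  - move=> h; case: (i =P a :> nat) => e.
      by apply/orP; left; apply/eqP/val_inj; rewrite /= inK //; lia.
    by apply/orP; right; apply/eqP/val_inj; rewrite /= inK //; lia.
apply: (zf_left (lo := a)); last lia; try lia.
apply: (zf_right (hi := a.+1)); try lia; first exact: zf_refl.

Qed.
Lemma bigmin_le_seq (I : eqType) (r : seq I) (P : pred I) F x i0 :
  i0 \in r -> P i0 -> \big[minn/x]_(i <- r | P i) F i <= F i0.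
Proof.
move=> + Pi; elim: r => // a s IH; rewrite inE big_cons => /orP [/eqP <-|h].
  by rewrite Pi geq_minl.
case: ifP => _; last exact: IH.
by rewrite (leq_trans (geq_minr _ _)) // IH.
Qed.

Lemma bigmin_le (I : finType) (P : pred I) F x i0 :
  P i0 -> \big[minn/x]_(i | P i) F i <= F i0.
Proof. by apply: bigmin_le_seq; rewrite mem_index_enum. Qed.

Lemma Z_path : Z adj = 1.
Proof.
apply/eqP; rewrite eqn_leq; apply/andP; split.
- rewrite /Z -(cards1 (ord0 : V)); apply: bigmin_le; apply/asboolP; exact: zf0.
- rewrite /Z; elim/big_ind: _ => // [|x y hx hy|S /asboolP hS].
  + by rewrite card_ord.
  + by rewrite leq_min hx hy.
  + by have [x hx _] := zf_good hS; apply/card_gt0P; exists x.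
Qed.

Lemma fortT : fort adj [set: V].
Proof.
apply/andP; split; first by apply/set0Pn; exists ord0.
by apply/forallP => v; rewrite !inE.
Qed.

Lemma ZIr1 x : ZIr_set adj [set x].
Proof.
apply/forallP=> y; apply/implyP; rewrite inE => /eqP ->.
by apply/existsP; exists [set: V]; rewrite /private_fort fortT setIT eqxx.
Qed.

Lemma privP (S : {set V}) x : ZIr_set adj S -> x \in S -> exists2 F, fort adj F & S :&: F = [set x].
Proof.
move=> /forallP /(_ x) /implyP h /h /existsP [F /andP [hF /eqP e]].
by exists F.
Qed.

Lemma notinF (S F : {set V}) x z : S :&: F = [set x] -> z \in S -> z != x -> z \notin F.
Proof.
move=> e hz hzx; apply/negP => hF.
by have := in_setI z S F; rewrite hz hF e inE (negbTE hzx).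
Qed.

Lemma max0 : maximal_ZIr_set adj [set ord0].
Proof.
apply/andP; split; first exact: ZIr1.
apply/forallP => S'; apply/implyP => /properP [hsub [y hy hny]].
apply/negP => hZ.
have [F hF e] := privP hZ hy.
have h0 : (ord0 : V) \in S' by apply: (subsetP hsub); rewrite inE.
have := notinF e h0; rewrite (fort0 hF).
by rewrite inE eq_sym in hny => /(_ hny).
Qed.

Lemma zir_path : zir adj = 1.
Proof.
apply/eqP; rewrite eqn_leq; apply/andP; split.
- rewrite /zir -(cards1 (ord0 : V)); apply: bigmin_le; exact: max0.
- rewrite /zir; elim/big_ind: _ => // [|x y hx hy|S hS].
  + by rewrite card_ord.
  + by rewrite leq_min hx hy.
  + rewrite card_gt0; apply/negP => /eqP e; subst S.
    case/andP: hS => _ /forallP /(_ [set ord0]) /implyP.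
    have hp : (set0 : {set V}) \proper [set ord0].
      by apply/properP; split; [apply: sub0set | exists ord0; rewrite inE].
    by move/(_ hp); rewrite ZIr1.
Qed.
Lemma Zbar_path : 3 <= m -> Zbar adj = 2.
Proof.
move=> m3; apply/eqP; rewrite eqn_leq; apply/andP; split.
- apply/bigmax_leqP => S /asboolP [hz hmin].
  rewrite leqNgt; apply/negP => h3.
  have [x hx hg] := zf_good hz.
  have hxm : x <= m by rewrite -ltnS ltn_ord.
  case: hg => [e|[e|[y hy e]]].
  + apply: (hmin [set x]).
    * by rewrite properEcard sub1set hx cards1; lia.
    * by rewrite (_ : x = (ord0 : V)); [exact: zf0 | apply: val_inj].
  + apply: (hmin [set x]).
    * by rewrite properEcard sub1set hx cards1; lia.
    * by rewrite (_ : x = (ord_max : V)); [exact: zfm | apply: val_inj].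
  + apply: (hmin [set x; y]).
    * rewrite properEcard subUset !sub1set hx hy /=.
      by apply: leq_ltn_trans (_ : #|[set x; y]| <= 2) _; [rewrite cards2; case: (_ != _)|].
    * have hym : y <= m by rewrite -ltnS ltn_ord.
      rewrite (_ : y = inord x.+1); last by apply/val_inj; rewrite /= inK; lia.
      by have := zfpair (a := x); rewrite inord_val; apply; lia.
- set S0 := [set (inord 1 : V); inord 2].
  have c2 : #|S0| = 2 by rewrite cards2; case: eqP => // /(congr1 val); rewrite /= !inK; lia.
  rewrite -{1}c2; apply: leq_bigmax_cond; apply/asboolP; split.
    by apply: zfpair; lia.
  move=> B' hp hz.
  have inS0 : forall z, z \in S0 -> (nat_of_ord z = 1) \/ (nat_of_ord z = 2).
    by move=> z; rewrite !inE => /orP [] /eqP ->; rewrite inK; lia.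
  have hsub := proper_sub hp.
  have [x hx hg] := zf_good hz.
  have := inS0 x (subsetP hsub x hx) => hx12.
  case: hg => [e|[e|[y hy e]]]; try lia.
  have := inS0 y (subsetP hsub y hy) => hy12.
  move: hp; rewrite properE => /andP [_ /negP]; apply.
  rewrite subUset !sub1set.
  rewrite (_ : inord 1 = x); last by apply/val_inj; rewrite /= inK; lia.
  rewrite (_ : inord 2 = y); last by apply/val_inj; rewrite /= inK; lia.
  by rewrite hx hy.
Qed.
Lemma pick_out (S A : {set V}) : #|A| < #|S| -> exists2 z, z \in S & z \notin A.
Proof.
move=> h; case: (boolP (S \subset A)) => [/subset_leq_card|/subsetPn [z hz hn]]; last by exists z.
by lia.
Qed.

Lemma ZIr_bound (S : {set V}) : 4 <= m -> ZIr_set adj S -> #|S| <= m./2.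
Proof.
move=> m4 hZ.
case: (leqP #|S| 2) => h2; first lia.
have n0 : (ord0 : V) \notin S.
  apply/negP => h0.
  have [x hx hn] := pick_out (A := [set ord0]) (S := S) (ltac:(rewrite cards1; lia)).
  have [F hF e] := privP hZ hx.
  by rewrite inE eq_sym in hn; have := notinF e h0 hn; rewrite (fort0 hF).
have nm : (ord_max : V) \notin S.
  apply/negP => h0.
  have [x hx hn] := pick_out (A := [set ord_max]) (S := S) (ltac:(rewrite cards1; lia)).
  have [F hF e] := privP hZ hx.
  by rewrite inE eq_sym in hn; have := notinF e h0 hn; rewrite (fortm hF).
have nadj : forall x y : V, x \in S -> y \in S -> nat_of_ord y = (nat_of_ord x).+1 -> False.
  move=> x y hx hy e.
  have [z hz hn] := pick_out (A := [set x; y]) (S := S)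
    (ltac:(apply: leq_ltn_trans (_ : #|[set x; y]| <= 2) _; [rewrite cards2; case: (_ != _)|]; lia)).
  have [F hF eF] := privP hZ hz.
  rewrite !inE negb_or in hn; case/andP: hn => hzx hzy.
  apply: (fort_adj hF (notinF eF hx _) (notinF eF hy _)); first by rewrite eq_sym.
  - by rewrite eq_sym.
  - by rewrite adjE e eqxx.
have ltm : forall x : V, x \in S -> x < m.
  move=> x hx; have := ltn_ord x; rewrite ltnS leq_eqVlt => /orP [/eqP e|//].
  by move: nm; rewrite (_ : ord_max = x) ?hx //; apply: val_inj.
pose f (x : V) : V := inord x.+1.
have cT : #|f @: S| = #|S|.
  apply: card_in_imset => x y hx hy; rewrite /f => exy.
  have := ltm x hx; have := ltm y hy => l1 l2.
  have := congr1 val exy; rewrite /= !inK // => h; apply/val_inj => /=; lia.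
have dis : S :&: f @: S = set0.
  apply/setP=> y; rewrite !inE; apply/negP => /andP [hy /imsetP [x hx ey]].
  apply: (nadj x y hx hy); rewrite ey inK //; exact: ltm.
have sub : S :|: f @: S \subset [set~ ord0].
  apply/subsetP=> y; rewrite !inE => /orP [hy|/imsetP [x hx ->]].
    by apply/negP => /eqP e; move: n0; rewrite -e hy.
  apply/negP => /eqP /(congr1 val); rewrite /= inK //; exact: ltm.
have := subset_leq_card sub; rewrite cardsC1 card_ord cardsU dis cards0 cT.
lia.
Qed.
Definition Sodd : {set V} := [set (inord (2 * j + 1) : V) | j : 'I_(m./2)].

Lemma SoddP (y : V) : y \in Sodd -> exists2 j, j < m./2 & nat_of_ord y = 2 * j + 1.
Proof.
case/imsetP => j _ ->; exists j => //; rewrite inK //.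
have := ltn_ord j; lia.
Qed.

Lemma card_Sodd : #|Sodd| = m./2.
Proof.
rewrite card_imset ?card_ord // => i j e.
have := congr1 val e; rewrite /= !inK; last 2 first.
- have := ltn_ord j; lia.
- have := ltn_ord i; lia.
by move=> h; apply/val_inj => /=; lia.
Qed.

Lemma ZIr_Sodd : ZIr_set adj Sodd.
Proof.
apply/forallP=> x; apply/implyP=> hx; apply/existsP; exists (~: (Sodd :\ x)).
apply/andP; split.
- apply/andP; split.
    apply/set0Pn; exists ord0; rewrite !inE negb_and; apply/orP; right.
    by apply/negP => /SoddP [j _]; rewrite /=; lia.
  apply/forallP => v; apply/implyP; rewrite !inE negbK => /andP [hvx hv].
  have [j hj ev] := SoddP hv.
  have hvi : v = inord v by rewrite inord_val.
  have v0 : 0 < v < m by lia.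
  have -> : nbhd adj v :&: ~: (Sodd :\ x) = nbhd adj v.
    apply/setIidPl/subsetP => w; rewrite nbhdE !inE negb_and => hw.
    apply/orP; right; apply/negP => /SoddP [k _ ew]; move: hw.
    rewrite ev ew; case/orP => /eqP; lia.
  by rewrite hvi card_nbhd_int.
- apply/eqP/setP => y; rewrite !inE negb_and negbK.
  case: (y =P x) => [->|ne]; first by rewrite hx.
  by rewrite andbC; case: (y \in Sodd).
Qed.

Lemma ZIR_path : 4 <= m -> ZIR adj = m./2.
Proof.
move=> m4; apply/eqP; rewrite eqn_leq; apply/andP; split.
- apply/bigmax_leqP => S /andP [hZ _]; exact: ZIr_bound.
- rewrite -{1}card_Sodd; apply: leq_bigmax_cond.
  apply/andP; split; first exact: ZIr_Sodd.
  apply/forallP => S'; apply/implyP => /proper_card hp; apply/negP => hZ.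
  move: hp; rewrite card_Sodd => hp.
  by have := leq_ltn_trans (ZIr_bound m4 hZ) hp; rewrite ltnn.
Qed.
End P.

Theorem proposition3p3 :
  (forall n : nat, 1 <= n ->
     zir (@path_adj n) = 1 /\ Z (@path_adj n) = 1) /\
  (forall n : nat, 4 <= n -> Zbar (@path_adj n) = 2) /\
  (forall n : nat, 5 <= n -> ZIR (@path_adj n) = (n - 1)./2).
Proof.
split; [|split]; case=> [|m] // hm.
- by split; [exact: zir_path | exact: Z_path].
- by apply: Zbar_path.
- by rewrite subn1 /=; apply: ZIR_path.
Qed.
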